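(* For every integer $n\geq 2$, every $1\leq i\leq n-1$ and every integer $0\leq s < i/2$, we have $w_{i,s}' < w_{i,s}$.
   Context: In $\{0,1,2\}^n$ (ordered coordinatewise), $L_i$ is the set of vectors with coordinate sum $i$, $L_i^s$ the elements of $L_i$ with exactly $s$ coordinates equal to $2$, $L_i^{\geq s}=\bigcup_{r\geq s}L_i^r$, $L_i^{\leq s}=\bigcup_{r\leq s}L_i^r$. For such $i,s$: \[w_{i,s}=\frac{|L_i||L_{i+1}^{\geq s+1}| - |L_{i+1}||L_i^{\geq s+1}|}{|L_i^s||L_i||L_{i+1}|(i-2s)},\qquad w_{i,s}'=\frac{|L_i||L_{i+1}^{\leq s}| - |L_{i+1}||L_i^{\leq s-1}|}{|L_i^s||L_i||L_{i+1}|(n-i+s)}.\] *)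

(* Defs.v *)
From HB Require Import structures.
From mathcomp Require Import all_boot all_order all_algebra.
Set Implicit Arguments. Unset Strict Implicit. Unset Printing Implicit Defensive.
Import Order.TTheory GRing.Theory Num.Theory.

Definition vec (n : nat) := {ffun 'I_n -> 'I_3}.

Definition vsum n (x : vec n) : nat := \sum_(j < n) (x j : nat).
Definition ntwo n (x : vec n) : nat := #|[set j : 'I_n | (x j : nat) == 2]|.

Definition L n i : {set vec n} := [set x : vec n | vsum x == i].
Definition Ls n i s : {set vec n} := [set x : vec n | (vsum x == i) && (ntwo x == s)].
Definition Lge n i s : {set vec n} := [set x : vec n | (vsum x == i) && (s <= ntwo x)].
Definition Lle n i s : {set vec n} := [set x : vec n | (vsum x == i) && (ntwo x <= s)].

Local Open Scope ring_scope.

Definition w (n i s : nat) : rat :=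
  ((#|L n i|%:R * #|Lge n i.+1 s.+1|%:R - #|L n i.+1|%:R * #|Lge n i s.+1|%:R)
   / (#|Ls n i s|%:R * #|L n i|%:R * #|L n i.+1|%:R * (i%:R - 2 * s%:R))).

(* note: L_i^{<= s-1} for s = 0 is empty; in nat, (s-1) truncates to 0, so we
   use the set of x with ntwo x < s instead *)
Definition Llt n i s : {set vec n} := [set x : vec n | (vsum x == i) && (ntwo x < s)%N].

Definition w' (n i s : nat) : rat :=
  ((#|L n i|%:R * #|Lle n i.+1 s|%:R - #|L n i.+1|%:R * #|Llt n i s|%:R)
   / (#|Ls n i s|%:R * #|L n i|%:R * #|L n i.+1|%:R * (n%:R - i%:R + s%:R))).

(* Main.v *)
Require Import Defs.
From HB Require Import structures.
From mathcomp Require Import all_boot all_order all_algebra.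
From mathcomp Require Import zify ring lra.
Set Implicit Arguments. Unset Strict Implicit. Unset Printing Implicit Defensive.
Import Order.TTheory GRing.Theory Num.Theory.

Section Comb.
Variable n : nat.

Lemma card_sum (T : finType) (P : pred T) : #|[set x | P x]| = \sum_(x : T) (P x : nat).
Proof.
rewrite -sum1dep_card big_mkcond /=; apply: eq_bigr => x _; by case: (P x).
Qed.

Definition upd (x : vec n) (j : 'I_n) (v : 'I_3) : vec n :=
  [ffun k => if k == j then v else x k].

Lemma sum_upd (g : 'I_3 -> nat) x j v :
  \sum_k g (upd x j v k) + g (x j) = \sum_k g (x k) + g v.
Proof.
rewrite (bigD1 j) //= [in RHS](bigD1 j) //= ffunE eqxx.
rewrite (eq_bigr (fun k => g (x k))); first by ring.
move=> k /negbTE kj; by rewrite ffunE kj.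
Qed.

Lemma ntwoE (x : vec n) : ntwo x = \sum_k (((x k : nat) == 2%N) : nat).
Proof. by rewrite /ntwo card_sum. Qed.

Lemma vsum_upd x j v : vsum (upd x j v) + x j = vsum x + v.
Proof. exact: (sum_upd (fun a => nat_of_ord a)). Qed.

Lemma ntwo_upd x j v : ntwo (upd x j v) + (((x j : nat) == 2%N) : nat)
   = ntwo x + (((v : nat) == 2%N) : nat).
Proof. rewrite !ntwoE; exact: (sum_upd (fun a : 'I_3 => (((a : nat) == 2%N) : nat))). Qed.

Lemma upd_id x j : upd x j (x j) = x.
Proof. apply/ffunP => k; rewrite ffunE; by case: eqP => // ->. Qed.

Lemma upd_upd x j a b : upd (upd x j a) j b = upd x j b.
Proof. apply/ffunP => k; rewrite !ffunE; by case: eqP. Qed.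

Lemma upd_j x j a : upd x j a j = a.
Proof. by rewrite ffunE eqxx. Qed.

Lemma card_upd (S1 S2 : {set vec n}) j v v' :
  (forall x, x \in S1 -> x j = v -> upd x j v' \in S2) ->
  (forall y, y \in S2 -> y j = v' -> upd y j v \in S1) ->
  #|[set x in S1 | x j == v]| = #|[set y in S2 | y j == v']|.
Proof.
move=> H1 H2.
have inj : {in [set x in S1 | x j == v] &, injective (fun x => upd x j v')}.
  move=> x1 x2; rewrite !inE => /andP [_ /eqP e1] /andP [_ /eqP e2] e.
  by rewrite -(upd_id x1 j) -(upd_id x2 j) e1 e2 -(upd_upd x1 j v' v) e upd_upd.
rewrite -(card_in_imset inj); apply: eq_card => y; rewrite !inE.
apply/imsetP/andP.
  case=> x; rewrite inE => /andP [xS /eqP xj] ->; split; first exact: H1.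
  by rewrite upd_j.
case=> yS /eqP yj; exists (upd y j v).
  by rewrite inE H2 //= upd_j.
by rewrite upd_upd -yj upd_id.
Qed.

Lemma dc (S : {set vec n}) v :
  \sum_(x in S) #|[set j | x j == v]| = \sum_j #|[set x in S | x j == v]|.
Proof.
under eq_bigr do rewrite card_sum.
rewrite exchange_big /=; apply: eq_bigr => j _.
rewrite card_sum big_mkcond /=; apply: eq_bigr => x _.
by case: (x \in S).
Qed.

Definition o0 : 'I_3 := @Ordinal 3 0 isT.
Definition o1 : 'I_3 := @Ordinal 3 1 isT.
Definition o2 : 'I_3 := @Ordinal 3 2 isT.

Lemma decomp (x : vec n) :
  vsum x = #|[set j | x j == o1]| + 2 * ntwo x /\
  n = #|[set j | x j == o0]| + #|[set j | x j == o1]| + ntwo x.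
Proof.
rewrite ntwoE !card_sum /vsum; split.
  rewrite big_distrr -big_split /=; apply: eq_bigr => k _.
  by case: (x k) => [[|[|[|m]]] Hm].
rewrite -big_split -big_split /= -[n in LHS]card_ord -sum1_card.
apply: eq_bigr => k _; by case: (x k) => [[|[|[|m]]] Hm].
Qed.


Lemma memLs x k t : (x \in Ls n k t) = (vsum x == k) && (ntwo x == t).
Proof. by rewrite inE. Qed.

Lemma D2 i t : (#|Ls n i t| * (n + t - i) = #|Ls n i.+1 t| * (i.+1 - 2 * t))%N.
Proof.
rewrite -!sum_nat_const.
rewrite (eq_bigr (fun x : vec n => #|[set j | x j == o0]|)); last first.
  move=> x; rewrite memLs => /andP [/eqP h1 /eqP h2].
  have [d1 d2] := decomp x; lia.
rewrite [RHS](eq_bigr (fun x : vec n => #|[set j | x j == o1]|)); last first.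
  move=> x; rewrite memLs => /andP [/eqP h1 /eqP h2].
  have [d1 d2] := decomp x; lia.
rewrite !dc; apply: eq_bigr => j _; apply: card_upd.
  move=> x; rewrite !memLs => /andP [/eqP h1 /eqP h2] xj.
  have := vsum_upd x j o1; have := ntwo_upd x j o1; rewrite xj /= => a b.
  apply/andP; split; apply/eqP; lia.
move=> x; rewrite !memLs => /andP [/eqP h1 /eqP h2] xj.
have := vsum_upd x j o0; have := ntwo_upd x j o0; rewrite xj /= => a b.
apply/andP; split; apply/eqP; lia.
Qed.

Lemma D3 i t : (#|Ls n i t| * (i - 2 * t) = #|Ls n i.+1 t.+1| * t.+1)%N.
Proof.
rewrite -!sum_nat_const.
rewrite (eq_bigr (fun x : vec n => #|[set j | x j == o1]|)); last first.
  move=> x; rewrite memLs => /andP [/eqP h1 /eqP h2].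
  have [d1 d2] := decomp x; lia.
rewrite [RHS](eq_bigr (fun x : vec n => #|[set j | x j == o2]|)); last first.
  move=> x; rewrite memLs => /andP [/eqP h1 /eqP h2].
  rewrite -h2 ntwoE card_sum; apply: eq_bigr => k _.
  by case: (x k) => [[|[|[|m]]] Hm].
rewrite !dc; apply: eq_bigr => j _; apply: card_upd.
  move=> x; rewrite !memLs => /andP [/eqP h1 /eqP h2] xj.
  have := vsum_upd x j o2; have := ntwo_upd x j o2; rewrite xj /= => a b.
  apply/andP; split; apply/eqP; lia.
move=> x; rewrite !memLs => /andP [/eqP h1 /eqP h2] xj.
have := vsum_upd x j o1; have := ntwo_upd x j o1; rewrite xj /= => a b.
apply/andP; split; apply/eqP; lia.
Qed.


Lemma ntwo_le (x : vec n) : (ntwo x <= n)%N.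
Proof. rewrite /ntwo -[X in (_ <= X)%N]card_ord; exact: max_card. Qed.

Lemma card_split j (P : pred nat) :
  #|[set x : vec n | (vsum x == j) && P (ntwo x)]| = (\sum_(t < n.+1 | P t) #|Ls n j t|)%N.
Proof.
rewrite -sum1_card (partition_big (fun x : vec n => (inord (ntwo x) : 'I_n.+1)) (fun t : 'I_n.+1 => P t)) /=.
  apply: eq_bigr => t Pt; rewrite -sum1_card; apply: eq_bigl => x.
  rewrite !inE -(inj_eq val_inj) /= inordK ?ltnS ?ntwo_le //.
  by case: (ntwo x =P t) => [->|]; rewrite ?Pt ?andbT ?andbF.
move=> x; rewrite inE => /andP [_ Px]; by rewrite inordK ?ltnS ?ntwo_le.
Qed.

Lemma exists_Ls p q : (p + q <= n)%N -> exists x : vec n, x \in Ls n (2 * p + q) p.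
Proof.
move=> hpq.
pose x : vec n := [ffun k : 'I_n => if (k < p)%N then o2 else if (k < p + q)%N then o1 else o0].
exists x; rewrite memLs; apply/andP; split; apply/eqP.
  rewrite /vsum (eq_bigr (fun k : 'I_n => (if (k < p)%N then 2 else if (k < p + q)%N then 1 else 0)%N)); last first.
    by move=> k _; rewrite ffunE; case: ifP => //; case: ifP.
  rewrite -(big_mkord xpredT (fun k => (if (k < p)%N then 2 else if (k < p + q)%N then 1 else 0)%N)).
  rewrite (big_cat_nat (leq0n p)) ?(leq_trans (leq_addr q p)) //=.
  rewrite (big_cat_nat (leq_addr q p)) //=.
  rewrite (eq_big_nat _ _ (F2 := fun=> 2%N)); last by move=> k /andP [_ ->].
  rewrite [X in (_ + (X + _))%N](eq_big_nat _ _ (F2 := fun=> 1%N)); last first.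
    by move=> k /andP [h1 ->]; rewrite ltnNge h1.
  rewrite [X in (_ + (_ + X))%N](eq_big_nat _ _ (F2 := fun=> 0%N)); last first.
    move=> k /andP [h1 _]; rewrite ltnNge (leq_trans (leq_addr q p) h1) /=.
    by rewrite ltnNge h1.
  rewrite !sum_nat_const_nat; lia.
rewrite ntwoE (eq_bigr (fun k : 'I_n => (k < p)%N : nat)); last first.
  by move=> k _; rewrite ffunE; case: ifP => //; case: ifP.
rewrite -(big_mkord xpredT (fun k => ((k < p)%N : nat))).
rewrite (big_cat_nat (leq0n p)) ?(leq_trans (leq_addr q p)) //=.
rewrite (eq_big_nat _ _ (F2 := fun=> 1%N)); last by move=> k /andP [_ ->].
rewrite [X in (_ + X)%N](eq_big_nat _ _ (F2 := fun=> 0%N)); last first.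
  by move=> k /andP [h1 _]; rewrite ltnNge h1.
rewrite !sum_nat_const_nat; lia.
Qed.

End Comb.

Local Open Scope ring_scope.
Lemma step_ineq (A c k : rat) : 2 <= A -> 2 <= c -> 0 <= k -> c + k <= A ->
  (c - 2) / (A - 1) + (k + 1) / A < c / A + k / (A + 1).
Proof.
move=> hA hc hk hck.
rewrite -subr_gt0.
have -> : c / A + k / (A + 1) - ((c - 2) / (A - 1) + (k + 1) / A) =
   ((A + 1) * (A + 1 - c) - k * (A - 1)) / (A * (A - 1) * (A + 1)).
  field; apply/and3P; split; apply/negP => /eqP h; lra.
apply: divr_gt0; last by apply: mulr_gt0; [apply: mulr_gt0|]; lra.
nra.
Qed.

Lemma arith (N0 N1 G0 G1 P Mr Bl U D fs fs1 bs bs1 : rat) :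
  N0 = P + Mr -> N1 = Bl + G1 -> fs * Bl <= P -> Mr <= fs1 * G1 ->
  bs <= Bl -> bs1 <= G1 -> 0 < bs -> 0 < bs1 -> fs1 < fs -> Mr = U + G0 ->
  0 < D -> N1 * (U * D) < (N0 * G1 - N1 * G0) * D.
Proof.
move=> eN0 eN1 hP hMle hBl hG1 hbs hbs1 hf hMr hD.
have hBlp : 0 < Bl by lra.
have hG1p : 0 < G1 by lra.
have hpos : 0 < Bl * G1 * (fs - fs1).
  by apply: mulr_gt0; [apply: mulr_gt0|]; lra.
have i1 : fs * Bl * G1 <= P * G1 by rewrite ler_wpM2r // ltW.
have i2 : Bl * Mr <= Bl * (fs1 * G1) by rewrite ler_wpM2l // ltW.
have key0 : 0 < P * G1 - Bl * Mr by nra.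
have : 0 < (P * G1 - Bl * Mr) * D by apply: mulr_gt0.
rewrite eN0 eN1 hMr; nra.
Qed.

Section Alg.
Variables (n i s : nat) (a b : nat -> rat).
Hypothesis ha0 : forall t, 0 <= a t.
Hypothesis hb0 : forall t, 0 <= b t.
Hypothesis H2 : forall t, b t * (i%:R + 1 - 2 * t%:R) = a t * (n%:R + t%:R - i%:R).
Hypothesis H3 : forall t, b t.+1 * (t%:R + 1) = a t * (i%:R - 2 * t%:R).
Hypothesis hbz : forall t, (i.+1 < 2 * t)%N -> b t = 0.
Hypothesis han : a n = 0.
Hypothesis hbn : b n = 0.
Hypothesis hn : (2 <= n)%N.
Hypothesis hi : (i.+1 <= n)%N.
Hypothesis hs : (2 * s < i)%N.
Hypothesis hbs : 0 < b s.
Hypothesis hbs1 : 0 < b s.+1.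

Definition f (t : nat) : rat := (i%:R + 1 - 2 * t%:R) / (n%:R - t%:R) + t%:R / (n%:R - t%:R + 1).
Definition U (t : nat) : rat := b t * t%:R / (n%:R - t%:R + 1).

Lemma f_step k : (2 * k.+1 <= i.+1)%N -> (k.+1 < n)%N -> f k.+1 < f k.
Proof.
move=> h1 h2; rewrite /f.
have := @step_ineq (n%:R - k%:R) (i%:R + 1 - 2 * k%:R) k%:R.
rewrite -[k.+1%:R]natr1.
have e1 : (n%:R - (k%:R + 1) + 1 : rat) = n%:R - k%:R by ring.
have e2 : (i%:R + 1 - 2 * (k%:R + 1) : rat) = i%:R + 1 - 2 * k%:R - 2 by ring.
have e3 : (n%:R - (k%:R + 1) : rat) = n%:R - k%:R - 1 by ring.
rewrite e1 e2 e3; apply.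
- have : ((k + 2)%:R <= n%:R :> rat) by rewrite ler_nat; lia.
  rewrite natrD; lra.
- have : ((2 * k + 2)%:R <= (i + 1)%:R :> rat) by rewrite ler_nat; lia.
  rewrite !natrD ?natrM; lra.
- by rewrite ler0n.
- have : ((i + 1)%:R <= n%:R :> rat) by rewrite ler_nat; lia.
  rewrite !natrD; lra.
Qed.

Lemma f_mono r t : (r <= t)%N -> (2 * t <= i.+1)%N -> (t < n)%N -> f t <= f r.
Proof.
elim: t => [|t IH] hrt h1 h2.
  by move: hrt; rewrite leqn0 => /eqP ->.
case: (ltngtP r t.+1) hrt => // [hlt|->] _; last by [].
apply: le_trans (ltW (f_step _ _)) (IH _ _ _) => //; lia.
Qed.

Lemma loc k : (k < n)%N -> b k * f k + U k.+1 = U k + a k.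
Proof.
move=> hk.
have nk : (n%:R - k%:R : rat) != 0.
  rewrite subr_eq0 eqr_nat; lia.
have nk1 : (n%:R - k%:R + 1 : rat) != 0.
  have : (k%:R < n%:R :> rat) by rewrite ltr_nat.
  move=> h; apply/eqP => h'; lra.
have ha : a k = (b k * (i%:R + 1 - 2 * k%:R) + b k.+1 * (k%:R + 1)) / (n%:R - k%:R).
  rewrite H2 H3; field => //.
rewrite ha /U /f -[k.+1%:R]natr1.
have -> : (n%:R - (k%:R + 1) + 1 : rat) = n%:R - k%:R by ring.
by field; rewrite nk nk1.
Qed.

Lemma telesc d : (d <= n)%N ->
  \sum_(n - d <= t < n.+1) b t * f t = U (n - d) + \sum_(n - d <= t < n.+1) a t.
Proof.
elim: d => [|d IH] hd.
  rewrite subn0 big_nat1 big_nat1 /U hbn han; rewrite !mul0r; ring.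
have e : (n - d = (n - d.+1).+1)%N by lia.
rewrite big_ltn ?ltnS ?leq_subr // [in RHS]big_ltn ?ltnS ?leq_subr //.
rewrite -e IH ?(ltnW hd) // e addrA loc; last lia.
ring.
Qed.

Lemma key :
  (\sum_(0 <= t < n.+1) b t) * a s * (i%:R - 2 * s%:R) <
  ((\sum_(0 <= t < n.+1) a t) * (\sum_(s.+1 <= t < n.+1) b t)
   - (\sum_(0 <= t < n.+1) b t) * (\sum_(s.+1 <= t < n.+1) a t)) * (n%:R - s%:R).
Proof.
set N0 := \sum_(0 <= t < n.+1) a t.
set N1 := \sum_(0 <= t < n.+1) b t.
set G0 := \sum_(s.+1 <= t < n.+1) a t.
set G1 := \sum_(s.+1 <= t < n.+1) b t.
have hsn : (s.+1 < n)%N by lia.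
have hM : \sum_(0 <= t < n.+1) b t * f t = N0.
  have := telesc (leqnn n); rewrite subnn /U mulr0 mul0r add0r; exact.
have hMr : \sum_(s.+1 <= t < n.+1) b t * f t = U s.+1 + G0.
  have := @telesc (n - s.+1) (leq_subr _ _).
  by rewrite (_ : n - (n - s.+1) = s.+1)%N; last lia.
have ns0 : (0 < n%:R - s%:R :> rat).
  by rewrite subr_gt0 ltr_nat; lia.
have hU : U s.+1 * (n%:R - s%:R) = a s * (i%:R - 2 * s%:R).
  rewrite /U -H3 -[s.+1%:R]natr1.
  have -> : (n%:R - (s%:R + 1) + 1 : rat) = n%:R - s%:R by ring.
  by field; rewrite gt_eqF.
set P := \sum_(0 <= t < s.+1) b t * f t.
set Mr := \sum_(s.+1 <= t < n.+1) b t * f t.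
set Bl := \sum_(0 <= t < s.+1) b t.
have eN0 : N0 = P + Mr.
  by rewrite -hM (big_cat_nat (leq0n s.+1)) //; lia.
have eN1 : N1 = Bl + G1.
  by rewrite /N1 (big_cat_nat (leq0n s.+1)) //; lia.
have hP : f s * Bl <= P.
  rewrite /Bl /P mulr_sumr; apply: ler_sum_nat => t /andP [_ ht].
  rewrite mulrC ler_wpM2l //; apply: f_mono => //; lia.
have hMle : Mr <= f s.+1 * G1.
  rewrite /Mr /G1 mulr_sumr; apply: ler_sum_nat => t /andP [h1 h2].
  case: (ltnP i.+1 (2 * t)) => h3; first by rewrite hbz // !mulr0 mul0r.
  rewrite [X in _ <= X]mulrC ler_wpM2l //; apply: f_mono => //; lia.
have hBl : b s <= Bl.
  rewrite /Bl big_nat_recr //= lerDr; apply: sumr_ge0 => t _; exact: hb0.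
have hG1 : b s.+1 <= G1.
  rewrite /G1 big_ltn; last lia. have : 0 <= \sum_(s.+2 <= t < n.+1) b t by apply: sumr_ge0 => t _; exact: hb0.
  lra.
have hf : f s.+1 < f s by apply: f_step; lia.
rewrite -mulrA -hU.
apply: (arith eN0 eN1 hP hMle hBl hG1 hbs hbs1 hf hMr ns0).
Qed.
End Alg.
Lemma filt_ge (F : nat -> rat) k m : (k <= m)%N ->
  \sum_(0 <= t < m | (k <= t)%N) F t = \sum_(k <= t < m) F t.
Proof.
move=> km; rewrite (big_cat_nat (leq0n k) km) /=.
rewrite [X in X + _]big_nat_cond [X in X + _]big1 ?add0r; last first.
  move=> t /andP [/andP [_ h] h']; by rewrite leqNgt h in h'.
rewrite big_nat_cond [RHS]big_nat_cond; apply: eq_bigl => t.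
by case: (leqP k t) => //=; rewrite andbF.
Qed.

Lemma filt_lt (F : nat -> rat) k m : (k <= m)%N ->
  \sum_(0 <= t < m | (t < k)%N) F t = \sum_(0 <= t < k) F t.
Proof.
move=> km; rewrite (big_cat_nat (leq0n k) km) /=.
rewrite [X in _ + X]big_nat_cond [X in _ + X]big1 ?addr0; last first.
  move=> t /andP [/andP [h _] h']; by rewrite ltnNge h in h'.
rewrite big_nat_cond [RHS]big_nat_cond; apply: eq_bigl => t.
by case: (ltnP t k) => //=; rewrite !andbT.
Qed.

Lemma final (N0 N1 G0 G1 H1 K0 c p q D : rat) :
  0 < c -> 0 < N0 -> 0 < N1 -> 0 < p -> 0 < q -> N1 = H1 + G1 -> N0 = K0 + c + G0 ->
  D = p + q -> N1 * c * q < (N0 * G1 - N1 * G0) * D ->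
  (N0 * H1 - N1 * K0) / (c * N0 * N1 * p) < (N0 * G1 - N1 * G0) / (c * N0 * N1 * q).
Proof.
move=> hc h0 h1 hp hq e1 e0 eD h.
have hD : 0 < c * N0 * N1 by rewrite !mulr_gt0.
rewrite -subr_gt0.
have -> : (N0 * G1 - N1 * G0) / (c * N0 * N1 * q) - (N0 * H1 - N1 * K0) / (c * N0 * N1 * p)
   = ((N0 * G1 - N1 * G0) * p - (N0 * H1 - N1 * K0) * q) / (c * N0 * N1 * p * q).
  by field; rewrite !gt_eqF.
apply: divr_gt0; last by rewrite !mulr_gt0.
have -> : H1 = N1 - G1 by rewrite e1; ring.
have -> : K0 = N0 - c - G0 by rewrite e0; ring.
rewrite eD in h; nra.
Qed.

Unset Implicit Arguments.

Theorem mainTheorem10 (n i s : nat) :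
  (2 <= n)%N -> (1 <= i)%N -> (i <= n - 1)%N -> (2 * s < i)%N ->
  w' n i s < w n i s.
Proof.
move=> hn hi1 hin hs.
have hi : (i.+1 <= n)%N by lia.
pose a t := (#|Ls n i t|%:R : rat).
pose b t := (#|Ls n i.+1 t|%:R : rat).
have Lsz k t : (k < 2 * t)%N -> #|Ls n k t| = 0%N.
  move=> h; apply: eq_card0 => x; rewrite memLs; apply/negP => /andP [/eqP h1 /eqP h2].
  have [d1 _] := decomp x; lia.
have H2 : forall t, b t * (i%:R + 1 - 2 * t%:R) = a t * (n%:R + t%:R - i%:R).
  move=> t; rewrite /a /b.
  case: (leqP (2 * t) i.+1) => ht; last first.
    by rewrite !Lsz ?mul0r //; lia.
  have eX : ((n + t - i)%:R : rat) = n%:R + t%:R - i%:R by rewrite natrB ?natrD //; lia.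
  have eY : ((i.+1 - 2 * t)%:R : rat) = i%:R + 1 - 2 * t%:R by rewrite natrB // -natr1 natrM.
  by rewrite -eX -eY -!natrM (D2 n i t).
have H3 : forall t, b t.+1 * (t%:R + 1) = a t * (i%:R - 2 * t%:R).
  move=> t; rewrite /a /b.
  case: (leqP (2 * t) i) => ht; last first.
    by rewrite !Lsz ?mul0r //; lia.
  have eY : ((i - 2 * t)%:R : rat) = i%:R - 2 * t%:R by rewrite natrB // natrM.
  by rewrite -eY natr1 -!natrM (D3 n i t).
have hbz : forall t, (i.+1 < 2 * t)%N -> b t = 0.
  by move=> t h; rewrite /b Lsz.
have han : a n = 0 by rewrite /a Lsz //; lia.
have hbn : b n = 0 by rewrite /b Lsz //; lia.
have hb0 : forall t, 0 <= b t by move=> t; rewrite ler0n.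
have has : (0 < #|Ls n i s|)%N.
  have [x hx] := @exists_Ls n s (i - 2 * s) ltac:(lia).
  apply/card_gt0P; exists x; by rewrite (_ : (2 * s + (i - 2 * s) = i)%N) in hx; last lia.
have hbsN : (0 < #|Ls n i.+1 s|)%N.
  have e := D2 n i s; rewrite lt0n; apply/negP => /eqP h0.
  rewrite h0 mul0n in e; move/eqP: e; rewrite muln_eq0 => /orP [/eqP h'|/eqP h']; lia.
have hbs1N : (0 < #|Ls n i.+1 s.+1|)%N.
  have e := D3 n i s; rewrite lt0n; apply/negP => /eqP h0.
  rewrite h0 mul0n in e; move/eqP: e; rewrite muln_eq0 => /orP [/eqP h'|/eqP h']; lia.
have hbs : 0 < b s by rewrite /b ltr0n.
have hbs1 : 0 < b s.+1 by rewrite /b ltr0n.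
have K := key hb0 H2 H3 hbz han hbn hn hi hs hbs hbs1.
have sum_of j (P : pred nat) :
    (#|[set x : vec n | (vsum x == j) && P (ntwo x)]|%:R : rat)
    = \sum_(0 <= t < n.+1 | P t) (#|Ls n j t|%:R : rat).
  by rewrite card_split natr_sum big_mkord.
have eL j : (#|L n j|%:R : rat) = \sum_(0 <= t < n.+1) (#|Ls n j t|%:R : rat).
  rewrite (_ : L n j = [set x : vec n | (vsum x == j) && xpredT (ntwo x)]).
    exact: (sum_of j xpredT).
  by apply/setP => x; rewrite !inE andbT.
have eGe j : (#|Lge n j s.+1|%:R : rat) = \sum_(s.+1 <= t < n.+1) (#|Ls n j t|%:R : rat).
  rewrite -(@filt_ge _ _ n.+1); last lia.
  exact: (sum_of j (fun t => s.+1 <= t)%N).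
have eLe : (#|Lle n i.+1 s|%:R : rat) = \sum_(0 <= t < s.+1) b t.
  rewrite -(@filt_lt _ _ n.+1); last lia.
  exact: (sum_of i.+1 (fun t => t <= s)%N).
have eLt : (#|Llt n i s|%:R : rat) = \sum_(0 <= t < s) a t.
  rewrite -(@filt_lt _ _ n.+1); last lia.
  exact: (sum_of i (fun t => t < s)%N).
have hp : (0 : rat) < n%:R - i%:R + s%:R.
  have : ((i + 1)%:R <= n%:R :> rat) by rewrite ler_nat; lia.
  rewrite natrD; have := ler0n rat s; lra.
have hq : (0 : rat) < i%:R - 2 * s%:R.
  have : ((2 * s + 1)%:R <= i%:R :> rat) by rewrite ler_nat; lia.
  rewrite natrD natrM; lra.
apply: (final (D := n%:R - s%:R)).
- by rewrite ltr0n.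
- rewrite ltr0n; apply: leq_trans has _; apply: subset_leq_card.
  by apply/subsetP => x; rewrite !inE => /andP [].
- rewrite ltr0n; apply: leq_trans hbsN _; apply: subset_leq_card.
  by apply/subsetP => x; rewrite !inE => /andP [].
- exact: hp.
- exact: hq.
- rewrite eL eLe eGe (big_cat_nat (leq0n s.+1)) //; lia.
- rewrite eL eLt eGe (big_cat_nat (leq0n s.+1)) /=; last lia.
  by rewrite big_nat_recr.
- ring.
- by rewrite !eL !eGe.
Qed.
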